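(* Let $r,M\ge 1$, $N\ge 1$ a real number, and ${\bf e}_{mn}\in\mathbb{C}^{r}$ ($1\le m,n\le M$) arbitrary vectors. Define, for ${\bf W}$ in the cone $\mathbb{H}^r_+$ of $r\times r$ positive semidefinite Hermitian matrices, $$g({\bf W};N)=\frac{1}{M}\sum_{m=1}^{M}\log\sum_{n=1}^{M}\Big(1+\tfrac12{\bf e}_{mn}^{\mathrm H}{\bf W}{\bf e}_{mn}\Big)^{-N}.$$ Then $g(\cdot;N)$ is convex on $\mathbb{H}^r_+$ and matrix nonincreasing there: if ${\bf W}_1\succeq{\bf W}_2\succeq{\bf 0}$ then $g({\bf W}_1;N)\le g({\bf W}_2;N)$.
   Context: $\log$ is the base-2 logarithm. ${\bf U}\succeq{\bf V}$ means ${\bf U}-{\bf V}$ is positive semidefinite. (In the paper's application ${\bf e}_{mn}={\bf x}_m-{\bf x}_n$ are differences of points of a finite constellation, but the claim holds for arbitrary vectors.) *)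

(* Defs.v *)
From HB Require Import structures.
From mathcomp Require Import all_boot all_order all_algebra.
From mathcomp Require Import complex.
From mathcomp Require Import all_classical all_reals all_analysis.
Set Implicit Arguments. Unset Strict Implicit. Unset Printing Implicit Defensive.
Import Order.TTheory GRing.Theory Num.Theory.
Local Open Scope ring_scope.
Local Open Scope complex_scope.

Definition ctrmx (R : realType) (m n : nat) (A : 'M[R[i]]_(m, n)) : 'M[R[i]]_(n, m) :=
  map_mx (@conjc R) A^T.

Definition qform (R : realType) (r : nat) (W : 'M[R[i]]_r) (v : 'cV[R[i]]_r) : R[i] :=
  (ctrmx v *m W *m v) 0 0.

(* W is Hermitian positive semidefinite: W^H = W and v^H W v >= 0 (real, nonneg) *)
Definition hpsd (R : realType) (r : nat) (W : 'M[R[i]]_r) : Prop :=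
  ctrmx W = W /\ forall v : 'cV[R[i]]_r, 0 <= qform W v.

Definition loewner_ge (R : realType) (r : nat) (U V : 'M[R[i]]_r) : Prop :=
  hpsd (U - V).

Definition log2 (R : realType) (x : R) : R := ln x / ln 2.

(* g(W;N) = 1/M sum_m log2 sum_n (1 + 1/2 e_mn^H W e_mn)^(-N) ;
   e_mn^H W e_mn is real for Hermitian W, we take its real part. *)
Definition gfun (R : realType) (r M : nat) (e : 'I_M -> 'I_M -> 'cV[R[i]]_r)
  (N : R) (W : 'M[R[i]]_r) : R :=
  M%:R^-1 * \sum_(m < M) log2 (\sum_(n < M)
      (1 + (complex.Re (qform W (e m n))) / 2) `^ (- N)).

(* Main.v *)
Require Import Defs.
From HB Require Import structures.
From mathcomp Require Import all_boot all_order all_algebra.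
From mathcomp Require Import complex.
From mathcomp Require Import all_classical all_reals all_analysis.
From mathcomp Require Import ring lra.
Import Order.TTheory GRing.Theory Num.Theory.
Local Open Scope ring_scope.

Section Helpers.
Variable R : realType.

Lemma ReM_h (a : R) (z : R[i]) : complex.Re ((a%:C)%C * z) = a * complex.Re z.
Proof. by case: z => x y /=; rewrite mul0r subr0. Qed.

Lemma ReD_h (z w : R[i]) : complex.Re (z + w) = complex.Re z + complex.Re w.
Proof. by case: z; case: w. Qed.

Lemma ReB_h (z w : R[i]) : complex.Re (z - w) = complex.Re z - complex.Re w.
Proof. by case: z; case: w. Qed.

Lemma Re_ge0_h (z : R[i]) : 0 <= z -> 0 <= complex.Re z.
Proof. by case: z => x y; rewrite lecE /= => /andP[]. Qed.

Lemma qformD_h (r : nat) (a b : R[i]) (W1 W2 : 'M[R[i]]_r) v :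
  qform (a *: W1 + b *: W2) v = a * qform W1 v + b * qform W2 v.
Proof.
by rewrite /qform mulmxDr mulmxDl -!scalemxAr -!scalemxAl !mxE.
Qed.

Lemma qformB_h (r : nat) (W1 W2 : 'M[R[i]]_r) v :
  qform (W1 - W2) v = qform W1 v - qform W2 v.
Proof. by rewrite /qform mulmxBr mulmxBl !mxE. Qed.

Lemma sum_gt0_h (M : nat) (F : 'I_M -> R) : (0 < M)%N -> (forall i, 0 < F i) ->
  0 < \sum_(i < M) F i.
Proof.
case: M F => // M F _ H; rewrite big_ord_recl.
apply: (lt_le_trans (H ord0)); rewrite lerDl sumr_ge0 // => i _.
exact: ltW.
Qed.

Lemma cvx_exp (t a b : R) : 0 <= t -> t <= 1 ->
  expR (t * a + (1 - t) * b) <= t * expR a + (1 - t) * expR b.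
Proof.
move=> t0 t1; have := convex_expR (Itv01 t0 t1) a b.
by rewrite !convRE /=.
Qed.

Lemma lse_cvx (M : nat) (A B : 'I_M -> R) (t : R) : (0 < M)%N -> 0 <= t -> t <= 1 ->
  ln (\sum_(i < M) expR (t * A i + (1 - t) * B i)) <=
  t * ln (\sum_(i < M) expR (A i)) + (1 - t) * ln (\sum_(i < M) expR (B i)).
Proof.
move=> M0 t0 t1.
set SA := \sum_(i < M) expR (A i); set SB := \sum_(i < M) expR (B i).
have SA0 : 0 < SA by apply: sum_gt0_h => // i; exact: expR_gt0.
have SB0 : 0 < SB by apply: sum_gt0_h => // i; exact: expR_gt0.
set C := t * ln SA + (1 - t) * ln SB.
suff H : \sum_(i < M) expR (t * A i + (1 - t) * B i) <= expR C.
  rewrite -[leRHS]expRK ler_ln ?posrE ?expR_gt0 //.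
  by apply: sum_gt0_h => // i; exact: expR_gt0.
have E : forall i, expR (t * A i + (1 - t) * B i) =
   expR C * expR (t * (A i - ln SA) + (1 - t) * (B i - ln SB)).
  move=> i; rewrite -expRD; congr expR; rewrite /C; ring.
under eq_bigr do rewrite E.
rewrite -mulr_sumr -[leRHS]mulr1 ler_wpM2l ?expR_ge0 //.
apply: (@le_trans _ _ (\sum_(i < M) (t * expR (A i - ln SA) + (1 - t) * expR (B i - ln SB)))).
  by apply: ler_sum => i _; apply: cvx_exp.
rewrite big_split /= -!mulr_sumr.
have HA : \sum_(i < M) expR (A i - ln SA) = 1.
  under eq_bigr do rewrite expRD expRN lnK ?posrE //.
  by rewrite -mulr_suml divff // gt_eqF.
have HB : \sum_(i < M) expR (B i - ln SB) = 1.
  under eq_bigr do rewrite expRD expRN lnK ?posrE //.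
  by rewrite -mulr_suml divff // gt_eqF.
by rewrite HA HB !mulr1 addrC subrK.
Qed.

Lemma p_pos {x : R} : 0 <= x -> 0 < 1 + x / 2.
Proof. by move=> x0; apply: ltr_wpDr => //; rewrite divr_ge0. Qed.

Lemma term_cvx (N t x y : R) : 0 <= N -> 0 <= t -> t <= 1 -> 0 <= x -> 0 <= y ->
  (1 + (t * x + (1 - t) * y) / 2) `^ (- N) <=
  expR (t * (- N * ln (1 + x / 2)) + (1 - t) * (- N * ln (1 + y / 2))).
Proof.
move=> N0 t0 t1 x0 y0.
have p0 := p_pos x0.
have q0 := p_pos y0.
have -> : 1 + (t * x + (1 - t) * y) / 2 = t * (1 + x / 2) + (1 - t) * (1 + y / 2)
  by ring.
have H : t * ln (1 + x / 2) + (1 - t) * ln (1 + y / 2) <=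
    ln (t * (1 + x / 2) + (1 - t) * (1 + y / 2)).
  exact: (concave_ln (Itv01 t0 t1) p0 q0).
have pos : 0 < t * (1 + x / 2) + (1 - t) * (1 + y / 2).
  exact: (convR_gt0 (Itv01 t0 t1) p0 q0).
rewrite /powR gt_eqF // ler_expR.
have -> : t * (- N * ln (1 + x / 2)) + (1 - t) * (- N * ln (1 + y / 2)) =
  - N * (t * ln (1 + x / 2) + (1 - t) * ln (1 + y / 2)) by ring.
by rewrite !mulNr lerN2 ler_wpM2l.
Qed.

Lemma term_mono (N x1 x2 : R) : 0 <= N -> 0 <= x2 -> x2 <= x1 ->
  (1 + x1 / 2) `^ (- N) <= (1 + x2 / 2) `^ (- N).
Proof.
move=> N0 x0 x12.
have q0 := p_pos x0.
have p0 := p_pos (le_trans x0 x12).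
rewrite /powR !gt_eqF // ler_expR !mulNr lerN2 ler_wpM2l // ler_ln ?posrE //.
by rewrite lerD2l ler_pM2r.
Qed.

Lemma powR_exp (N x : R) : 0 <= x ->
  (1 + x / 2) `^ (- N) = expR (- N * ln (1 + x / 2)).
Proof. move=> x0; have p0 := p_pos x0. by rewrite /powR gt_eqF. Qed.

Lemma ln2_gt0_h : 0 < ln (2 : R).
Proof. by apply: ln_gt0; rewrite ltr1n. Qed.

Lemma row_cvx (M : nat) (x y : 'I_M -> R) (N t : R) : (0 < M)%N -> 0 <= N ->
  0 <= t -> t <= 1 -> (forall n, 0 <= x n) -> (forall n, 0 <= y n) ->
  log2 (\sum_(n < M) (1 + (t * x n + (1 - t) * y n) / 2) `^ (- N)) <=
  t * log2 (\sum_(n < M) (1 + x n / 2) `^ (- N)) +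
  (1 - t) * log2 (\sum_(n < M) (1 + y n / 2) `^ (- N)).
Proof.
move=> M0 N0 t0 t1 x0 y0.
have iln2 : 0 <= (ln (2 : R))^-1 by rewrite invr_ge0 ltW // ln2_gt0_h.
rewrite /log2.
have -> : forall a b : R, t * (a / ln 2) + (1 - t) * (b / ln 2) =
    (t * a + (1 - t) * b) / ln 2 by move=> a b; ring.
apply: (ler_wpM2r iln2).
apply: (le_trans (y := ln (\sum_(n < M) expR (t * (- N * ln (1 + x n / 2))
            + (1 - t) * (- N * ln (1 + y n / 2)))))).
  rewrite ler_ln ?posrE.
  + by apply: ler_sum => n _; apply: term_cvx.
  + apply: sum_gt0_h => [//|n]; apply: powR_gt0; apply: p_pos.
    apply: addr_ge0; apply: mulr_ge0; [exact: t0|exact: x0|by rewrite subr_ge0|exact: y0].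
  + by apply: sum_gt0_h => [//|n]; exact: expR_gt0.
under [X in _ <= t * ln X + _]eq_bigr => n _ do rewrite (powR_exp N _ (x0 n)).
under [X in _ <= _ + (1 - t) * ln X]eq_bigr => n _ do rewrite (powR_exp N _ (y0 n)).
exact: (@lse_cvx M (fun n => - N * ln (1 + x n / 2)) (fun n => - N * ln (1 + y n / 2)) t M0 t0 t1).
Qed.

Lemma ReqD (r : nat) (t : R) (W1 W2 : 'M[R[i]]_r) v :
  complex.Re (qform ((t%:C)%C *: W1 + ((1 - t)%:C)%C *: W2) v) =
  t * complex.Re (qform W1 v) + (1 - t) * complex.Re (qform W2 v).
Proof. rewrite qformD_h. rewrite ReD_h. rewrite !ReM_h. by []. Qed.

Lemma row_main (r M : nat) (e : 'I_M -> 'cV[R[i]]_r) (N t : R) (W1 W2 : 'M[R[i]]_r) :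
  (0 < M)%N -> 0 <= N -> 0 <= t -> t <= 1 ->
  (forall v, 0 <= qform W1 v) -> (forall v, 0 <= qform W2 v) ->
  log2 (\sum_(n < M) (1 + complex.Re (qform ((t%:C)%C *: W1 + ((1 - t)%:C)%C *: W2) (e n)) / 2) `^ (- N))
  <= t * log2 (\sum_(n < M) (1 + complex.Re (qform W1 (e n)) / 2) `^ (- N))
   + (1 - t) * log2 (\sum_(n < M) (1 + complex.Re (qform W2 (e n)) / 2) `^ (- N)).
Proof.
move=> M0 N0 t0 t1 H1 H2.
have E : \sum_(n < M) (1 + complex.Re (qform ((t%:C)%C *: W1 + ((1 - t)%:C)%C *: W2) (e n)) / 2) `^ (- N)
    = \sum_(n < M) (1 + (t * complex.Re (qform W1 (e n)) + (1 - t) * complex.Re (qform W2 (e n))) / 2) `^ (- N).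
  by apply: eq_bigr => n _; rewrite ReqD.
have x0 : forall n, 0 <= complex.Re (qform W1 (e n)) by move=> n; apply: Re_ge0_h.
have y0 : forall n, 0 <= complex.Re (qform W2 (e n)) by move=> n; apply: Re_ge0_h.
have K := (@row_cvx M (fun n => complex.Re (qform W1 (e n)))
     (fun n => complex.Re (qform W2 (e n))) N t M0 N0 t0 t1 x0 y0).
apply: (le_trans _ K).
(rewrite le_eqVlt; apply/orP; left; apply/eqP).
exact: (f_equal (@log2 R) E).
Qed.

Lemma comb_le (a B1 B2 B3 t : R) : 0 <= a -> B1 <= t * B2 + (1 - t) * B3 ->
  a * B1 <= t * (a * B2) + (1 - t) * (a * B3).
Proof.
move=> a0 H; have -> : t * (a * B2) + (1 - t) * (a * B3) = a * (t * B2 + (1 - t) * B3)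
  by ring.
exact: ler_wpM2l.
Qed.

End Helpers.
Arguments Re_ge0_h {R z}.

Theorem proposition4 (R : realType) (r M : nat) (N : R)
  (e : 'I_M -> 'I_M -> 'cV[R[i]]_r) :
  (1 <= r)%N -> (1 <= M)%N -> 1 <= N ->
  (forall (W1 W2 : 'M[R[i]]_r) (t : R), hpsd W1 -> hpsd W2 -> 0 <= t <= 1 ->
     gfun e N ((t%:C)%C *: W1 + ((1 - t)%:C)%C *: W2)
       <= t * gfun e N W1 + (1 - t) * gfun e N W2) /\
  (forall W1 W2 : 'M[R[i]]_r, hpsd W2 -> loewner_ge W1 W2 ->
     gfun e N W1 <= gfun e N W2).
Proof.
move=> _ M1 N1.
have N0 : 0 <= N by apply: le_trans N1.
have iln2 : 0 <= (ln (2 : R))^-1 by rewrite invr_ge0 ltW // ln2_gt0_h.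
have iM : 0 <= (M%:R : R)^-1 by rewrite invr_ge0 ler0n.
have posS : forall F : 'I_M -> R, (forall n, 0 <= F n) ->
    0 < \sum_(n < M) (1 + F n / 2) `^ (- N).
  move=> F F0; apply: sum_gt0_h => // n; apply: powR_gt0.
  exact: p_pos.
split.
- move=> W1 W2 t [_ H1] [_ H2] /andP[t0 t1].
  rewrite /gfun; apply: (@comb_le R _ _ _ _ t iM).
  rewrite !mulr_sumr -big_split /=; apply: ler_sum => m _.
  exact: (@row_main R r M (e m) N t W1 W2 M1 N0 t0 t1 H1 H2).
- move=> W1 W2 [_ H2] [_ H12].
  rewrite /gfun; apply: (ler_wpM2l iM); apply: ler_sum => m _.
  rewrite /log2; apply: (ler_wpM2r iln2); rewrite ler_ln ?posrE.
  + apply: ler_sum => n _; apply: term_mono; first exact: N0.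
      exact: Re_ge0_h.
    by rewrite -subr_ge0 -ReB_h -qformB_h; apply: Re_ge0_h.
  + apply: posS => n /=.
    have h1 := Re_ge0_h (H2 (e m n)).
    have h2 : complex.Re (qform W2 (e m n)) <= complex.Re (qform W1 (e m n)).
      by rewrite -subr_ge0 -ReB_h -qformB_h; apply: Re_ge0_h.
    exact: (le_trans h1 h2).
  + by apply: posS => n; apply: Re_ge0_h.
Qed.
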